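(* Let $T_1$ and $T_2$ be subtrees of a tree $T$ such that $T=T_1\cup T_2$. Then $\operatorname{pw}(T)+1\le (\operatorname{pw}(T_1)+1)+(\operatorname{pw}(T_2)+1)$.
   Context: $\operatorname{pw}$ denotes pathwidth: the minimum, over all path decompositions (sequences of vertex subsets such that each edge lies in some set and each vertex lies in a non-empty consecutive run of sets), of the maximum set size minus 1. A subtree is a connected subgraph of $T$. *)

(* Defs.v *)
From Stdlib Require Import ClassicalEpsilon.
From mathcomp Require Import all_boot.
Set Implicit Arguments. Unset Strict Implicit. Unset Printing Implicit Defensive.

Section Graphs.
Variables (V : finType) (e : rel V).

Definition simple_graph : Prop := symmetric e /\ irreflexive e.

Definition connected_on (S : {set V}) : Prop :=
  S != set0 /\
  forall u v, u \in S -> v \in S ->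
    connect [rel x y | [&& e x y, x \in S & y \in S]] u v.

Definition has_cycle : Prop :=
  exists (x : V) (p : seq V),
    [/\ 2 <= size p, uniq (x :: p), path e x p & e (last x p) x].

Definition is_tree : Prop :=
  simple_graph /\ connected_on setT /\ ~ has_cycle.

(* path decomposition of the subgraph induced on S (a subgraph of a tree
   that is connected is induced) *)
Definition is_path_decomp (S : {set V}) (s : seq {set V}) : Prop :=
  [/\ forall B, B \in s -> B \subset S,
      forall u v, u \in S -> v \in S -> e u v ->
        exists2 B, B \in s & (u \in B) && (v \in B)
    & forall v, v \in S ->
        exists i j, (i <= j < size s) /\
          forall k, (v \in nth set0 s k) = (i <= k <= j)].

Definition has_pd_of_width_le (S : {set V}) (k : nat) : Prop :=
  exists s, is_path_decomp S s /\ forall B, B \in s -> #|B| <= k.+1.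

Lemma has_pd_exists (S : {set V}) : exists k, has_pd_of_width_le S k.
Proof.
exists #|S|; exists [:: S]; split; last first.
  by move=> B; rewrite inE => /eqP ->.
split.
- by move=> B; rewrite inE => /eqP ->.
- by move=> u v uS vS _; exists S; rewrite ?inE ?uS ?vS.
- move=> v vS; exists 0, 0; split => // [[|[|k]]] //=; by rewrite inE.
Qed.

Definition has_pd_of_width_leb (S : {set V}) (k : nat) : bool :=
  if excluded_middle_informative (has_pd_of_width_le S k) then true else false.

Lemma has_pd_exists_bool (S : {set V}) : exists k, has_pd_of_width_leb S k.
Proof.
have [k Hk] := has_pd_exists S; exists k; rewrite /has_pd_of_width_leb.
by case: excluded_middle_informative.
Qed.

Definition pw (S : {set V}) : nat := ex_minn (has_pd_exists_bool S).
End Graphs.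

(* Main.v *)
Require Import Defs.
From Stdlib Require Import ClassicalEpsilon.
From mathcomp Require Import all_boot zify.
Set Implicit Arguments. Unset Strict Implicit. Unset Printing Implicit Defensive.

Lemma path_in (T : eqType) (r : rel T) (P : pred T) x q :
  (forall a b, r a b -> P b) -> path r x q -> all P q.
Proof.
elim: q x => //= y q IH x Hr /andP[rxy pq].
by rewrite (Hr _ _ rxy) (IH y Hr pq).
Qed.

Section Anchor.
Variables (V : finType) (e : rel V) (S1 : {set V}).
Hypothesis esym : symmetric e.
Hypothesis acyc : ~ has_cycle e.
Hypothesis S1c : connected_on e S1.

Definition rout := [rel x y | [&& e x y, x \notin S1 & y \notin S1]].
Definition rin := [rel x y | [&& e x y, x \in S1 & y \in S1]].

Lemma rout_sym : symmetric rout.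
Proof. by move=> x y /=; rewrite esym; case: (x \in S1); case: (y \in S1); rewrite ?andbF. Qed.

Lemma anchor_uniq c c' w w' : c \notin S1 -> c' \notin S1 ->
  connect rout c' c -> w \in S1 -> w' \in S1 -> e c w -> e c' w' -> w = w'.
Proof.
move=> cS c'S /connectP[p0 pp0 lp0] wS w'S ecw ec'w'.
case: (eqVneq w w') => // ww'; exfalso.
have [_ /(_ w w' wS w'S) /connectP[q0 pq0 lq0]] := S1c.
move: lp0; case: (shortenP pp0) => p pp up _ lp.
move: lq0; case: (shortenP pq0) => q pq uq _ lq.
have qin : all (mem S1) q by apply: (path_in _ pq) => a b /and3P[].
have pout : all (fun x => x \notin S1) p by apply: (path_in _ pp) => a b /and3P[].
apply: acyc; exists w, (q ++ c' :: p); split.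
- case: q lq {pq uq qin} => [|? ?] /=; last by rewrite size_cat /= addnS.
  by move=> h; rewrite h eqxx in ww'.
- rewrite -cat_cons cat_uniq uq up andbT.
  apply/hasPn => x xin; apply/negP => xwq.
  have xo : x \notin S1.
    by move: xin; rewrite inE => /predU1P[->//|]; move/allP: pout => H /H.
  have : x \in S1.
    by move: xwq; rewrite inE => /predU1P[->//|]; move/allP: qin => H /H.
  by rewrite (negbTE xo).
- rewrite cat_path (sub_path _ pq); last by move=> a b /and3P[].
  rewrite /= -lq esym ec'w' /=.
  by rewrite (sub_path _ pp) // => a b /and3P[].
- by rewrite last_cat /= -lp.
Qed.

Lemma conn_out u c : connect rout u c -> u \notin S1 -> c \notin S1.
Proof.
case/connectP => p pp -> uS.
have pout : all (fun x => x \notin S1) p by apply: (path_in _ pp) => a b /and3P[].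
have := mem_last u p; rewrite inE => /predU1P[->//|].
by move/allP: pout => H /H.
Qed.

Definition anchor (a0 : V) u :=
  odflt a0 [pick w | (w \in S1) && [exists c, connect rout u c && e c w]].

Lemma anchor_in a0 u : a0 \in S1 -> anchor a0 u \in S1.
Proof. by rewrite /anchor; case: pickP => //= w /andP[]. Qed.

Lemma anchor_out a0 u v : u \notin S1 -> v \notin S1 -> e u v -> anchor a0 u = anchor a0 v.
Proof.
move=> uS vS euv; rewrite /anchor; congr odflt; apply: eq_pick => w /=.
have r : rout u v by rewrite /= euv uS vS.
have sc := same_connect (sym_connect_sym rout_sym) (@connect1 _ rout u v r).
by congr (_ && _); apply: eq_existsb => c; rewrite sc.
Qed.

Lemma anchor_edge a0 u w : u \notin S1 -> w \in S1 -> e u w -> anchor a0 u = w.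
Proof.
move=> uS wS euw; rewrite /anchor; case: pickP => [w' /andP[w'S /existsP[c /andP[uc ecw']]] | H] /=.
  apply: (anchor_uniq (c:=c) (c':=u)) => //.
  exact: conn_out uc uS.
have := H w; rewrite wS /=; move/negbT/negP; case.
by apply/existsP; exists u; rewrite connect0 euw.
Qed.
End Anchor.

Section Main.
Variables (V : finType) (e : rel V) (S1 S2 : {set V}) (anc : V -> V).
Variables (s1 s2 : seq {set V}) (k1 k2 : nat).
Hypothesis esym : symmetric e.
Hypothesis H1 : is_path_decomp e S1 s1.
Hypothesis H2 : is_path_decomp e S2 s2.
Hypothesis W1 : forall B, B \in s1 -> #|B| <= k1.+1.
Hypothesis W2 : forall B, B \in s2 -> #|B| <= k2.+1.
Hypothesis cov : forall v, v \in S1 :|: S2.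
Hypothesis edg : forall u v, e u v -> ((u \in S1) && (v \in S1)) || ((u \in S2) && (v \in S2)).
Hypothesis ancS : forall u, anc u \in S1.
Hypothesis ancO : forall u v, u \notin S1 -> v \notin S1 -> e u v -> anc u = anc v.
Hypothesis ancI : forall u w, u \notin S1 -> w \in S1 -> e u w -> anc u = w.

Local Notation m := (size s2).
Local Notation M := (size s2).+1.
Local Notation n := (size s1).
Local Notation N := (size s1 * (size s2).+1).
Definition idx a := find (fun B : {set V} => a \in B) s1.
Definition F t := nth set0 s1 (t %/ M) :|:
  [set v in nth set0 s2 (t %% M).-1 | [&& 0 < t %% M, v \notin S1 & idx (anc v) == t %/ M]].

Lemma idx_ok a : a \in S1 -> idx a < n /\ a \in nth set0 s1 (idx a).
Proof.
case: H1 => _ _ /(_ a) h /h [i [j [/andP[ij jn] Hk]]].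
have hs : has (fun B : {set V} => a \in B) s1.
  apply/hasP; exists (nth set0 s1 i); first by apply: mem_nth; apply: leq_ltn_trans jn.
  by rewrite Hk leqnn ij.
split; first by rewrite /idx -has_find.
exact: (nth_find set0 hs).
Qed.

Lemma nth_sub1 k : nth set0 s1 k \subset S1.
Proof.
case: (ltnP k n) => h; first by case: H1 => + _ _; apply; apply: mem_nth.
by rewrite nth_default // sub0set.
Qed.

Lemma card1 k : #|nth set0 s1 k| <= k1.+1.
Proof.
case: (ltnP k n) => h; first by apply: W1; apply: mem_nth.
by rewrite nth_default // cards0.
Qed.

Lemma card2 k : #|nth set0 s2 k| <= k2.+1.
Proof.
case: (ltnP k m) => h; first by apply: W2; apply: mem_nth.
by rewrite nth_default // cards0.
Qed.

Lemma memF t v : (v \in F t) = (v \in nth set0 s1 (t %/ M)) ||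
  [&& v \in nth set0 s2 (t %% M).-1, 0 < t %% M, v \notin S1 & idx (anc v) == t %/ M].
Proof. by rewrite /F !inE. Qed.

Lemma nthS t : nth set0 (mkseq F N) t = if t < N then F t else set0.
Proof.
case: ltnP => h; first by rewrite nth_mkseq.
by rewrite nth_default // size_mkseq.
Qed.

Lemma cover_one u v : e u v -> u \notin S1 -> exists t, [/\ t < N, u \in F t & v \in F t].
Proof.
move=> euv uS.
have /andP[uS2 vS2] : (u \in S2) && (v \in S2).
  by have := edg euv; rewrite (negbTE uS).
case: H2 => _ /(_ u v uS2 vS2 euv) [D Ds /andP[uD vD]] _.
set j := index D s2.
have jm : j < m by rewrite index_mem.
have Dj : nth set0 s2 j = D by rewrite nth_index.
have [qn _] := idx_ok (ancS u).
set q := idx (anc u).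
have tM : (q * M + j.+1) %% M = j.+1 by rewrite modnMDl modn_small.
have tD : (q * M + j.+1) %/ M = q by rewrite divnMDl // divn_small // addn0.
exists (q * M + j.+1); split.
-  nia.
- by rewrite memF tM tD /= Dj uD uS eqxx orbT.
- rewrite memF tM tD /= Dj vD.
  case vS: (v \in S1).
    by rewrite /q (ancI uS vS euv); have [_ ->] := idx_ok vS.
  by rewrite /q (ancO uS (negbT vS) euv) eqxx orbT.
Qed.

Lemma cover u v : e u v -> exists t, [/\ t < N, u \in F t & v \in F t].
Proof.
move=> euv; case uS: (u \in S1); last exact: cover_one (negbT uS).
case vS: (v \in S1); last first.
  have evu : e v u by rewrite esym.
  have [t [? ? ?]] := cover_one evu (negbT vS).
  by exists t.
case: H1 => _ /(_ u v uS vS euv) [B Bs /andP[uB vB]] _.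
have Bi : nth set0 s1 (index B s1) = B by rewrite nth_index.
exists (index B s1 * M); rewrite !memF mulnK // modnMl Bi uB vB; split => //.
rewrite ltn_pmul2r // index_mem //.
Qed.

Lemma decomp : is_path_decomp e setT (mkseq F N).
Proof.
split.
- by move=> B _; apply: subsetT.
- move=> u v _ _ euv; have [t [tN uF vF]] := cover euv.
  exists (F t); last by rewrite uF vF.
  by rewrite -(nth_mkseq set0 F tN); apply: mem_nth; rewrite size_mkseq.
- move=> v _; case vS: (v \in S1).
    case: H1 => _ _ /(_ v vS) [i [j [/andP[ij jn] Hk]]].
    exists (i * M), (j * M + m); rewrite size_mkseq; split; first by have := leq_mul ij (leqnn M); have := leq_mul jn (leqnn M); rewrite mulSn; lia.
    move=> k; rewrite nthS; case: ltnP => kN.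
      rewrite memF vS !andbF orbF Hk.
      rewrite leq_divRL // -[k %/ M <= j]ltnS ltn_divLR // mulSn.
      lia.
    rewrite in_set0; symmetry; apply/negbTE; have := leq_mul jn (leqnn M); rewrite mulSn; lia.
  have vS2 : v \in S2 by move: (cov v); rewrite inE vS.
  case: H2 => _ _ /(_ v vS2) [i [j [/andP[ij jm] Hk]]].
  have [qn _] := idx_ok (ancS v).
  set q := idx (anc v).
  exists (q * M + i.+1), (q * M + j.+1); rewrite size_mkseq; split; first by have := leq_mul qn (leqnn M); rewrite mulSn; lia.
  move=> k; rewrite nthS; case: ltnP => kN.
    rewrite memF.
    have -> : (v \in nth set0 s1 (k %/ M)) = false.
      by apply/negbTE; apply: contraFN vS; apply: (subsetP (nth_sub1 _)).
    rewrite /= Hk vS /=.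
    rewrite -/q.
    move: (k %/ M) (k %% M) (divn_eq k M) (ltn_pmod k (ltn0Sn m)) => a r -> rM.
    case: (eqVneq q a) => [<-|ne].
      rewrite andbT; case: r rM => [|r] rM /=; lia.
    rewrite !andbF; symmetry; apply/negbTE.
    case: (ltngtP q a) ne => // qa _.
      have := leq_mul qa (leqnn M); rewrite mulSn; lia.
    have := leq_mul qa (leqnn M); rewrite mulSn; lia.
  rewrite in_set0; symmetry; apply/negbTE.
  have := leq_mul qn (leqnn M); rewrite mulSn; lia.
Qed.

Lemma widthF B : B \in mkseq F N -> #|B| <= (k1 + k2 + 1).+1.
Proof.
case/mapP => t _ ->; rewrite /F.
apply: leq_trans (leq_card_setU _ _) _.
have c1 := card1 (t %/ M).
have c2 : #|[set v in nth set0 s2 (t %% M).-1 | [&& 0 < t %% M, v \notin S1 & idx (anc v) == t %/ M]]| <= k2.+1.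
  apply: leq_trans (card2 (t %% M).-1).
  by apply: subset_leq_card; apply/subsetP => x; rewrite inE => /andP[].
lia.
Qed.
End Main.

Lemma pw_spec (V : finType) (e : rel V) S :
  has_pd_of_width_le e S (pw e S) /\ forall k, has_pd_of_width_le e S k -> pw e S <= k.
Proof.
rewrite /pw; case: ex_minnP => k Hk Hmin; split.
  by move: Hk; rewrite /has_pd_of_width_leb; case: excluded_middle_informative.
move=> j Hj; apply: Hmin; rewrite /has_pd_of_width_leb.
by case: excluded_middle_informative.
Qed.

Theorem lemma7 (V : finType) (e : rel V) (S1 S2 : {set V}) :
  is_tree e ->
  connected_on e S1 -> connected_on e S2 ->
  (forall v, v \in S1 :|: S2) ->
  (forall u v, e u v -> ((u \in S1) && (v \in S1)) || ((u \in S2) && (v \in S2))) ->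
  pw e setT + 1 <= (pw e S1 + 1) + (pw e S2 + 1).
Proof.
move=> [[esym _] [_ acyc]] S1c S2c cov edg.
have [a0 a0S] : exists a0, a0 \in S1 by case: S1c => /set0Pn.
have [[s1 [D1 W1]] _] := pw_spec e S1.
have [[s2 [D2 W2]] _] := pw_spec e S2.
have [_ mn] := pw_spec e setT.
suff : pw e setT <= pw e S1 + pw e S2 + 1 by lia.
apply: mn; exists (mkseq (F S1 (anchor e S1 a0) s1 s2) (size s1 * (size s2).+1)).
split.
  apply: decomp; try eassumption;
  first [by move=> u; apply: anchor_in | by move=> u v; apply: anchor_out
        | by move=> u w; apply: anchor_edge].
exact: widthF.
Qed.
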